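(* Let $n$ be a positive odd integer. Then, modulo $(1-aq^n)(a-q^n)$, $$ \sum_{k=0}^{n-1}\frac{(aq;q^2)_k\,(q/a;q^2)_k}{(q^2;q^2)_k^2}\, x^k \equiv (-1)^{(n-1)/2}q^{(1-n^2)/4} \sum_{k=0}^{n-1}\frac{(aq;q^2)_k\,(q/a;q^2)_k}{(q^2;q^2)_k^2}\, q^{2k}\,(x;q^2)_k. $$
   Context: $a,q,x$ are indeterminates. The $q$-shifted factorial is $(y;q)_0=1$ and $(y;q)_m=(1-y)(1-yq)\cdots(1-yq^{m-1})$ for $m\geqslant1$. For rational functions $A,B$ and a polynomial $P$, $A\equiv B\pmod P$ means $A-B=P\cdot C/D$ for polynomials $C,D$ with $D$ coprime to $P$. *)

(* Defs.v *)
From HB Require Import structures.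
From mathcomp Require Import all_boot all_order all_algebra.
Set Implicit Arguments. Unset Strict Implicit. Unset Printing Implicit Defensive.
Import GRing.Theory.
Local Open Scope ring_scope.

(* Polynomial ring Q[a,q,x]: innermost variable a, then q, outermost x. *)
Definition Rp := {poly {poly {poly rat}}}.
Definition Kf := {fraction Rp}.

Definition pa : Rp := ('X%:P)%:P.
Definition pq : Rp := ('X)%:P.
Definition px : Rp := 'X.

Definition fa : Kf := tofrac pa.
Definition fq : Kf := tofrac pq.
Definition fx : Kf := tofrac px.

Definition qpoch (F : nzRingType) (y q : F) (m : nat) : F :=
  \prod_(i < m) (1 - y * q ^+ i).

Definition divR (g p : Rp) : Prop := exists h : Rp, p = h * g.

Definition coprimeR (D P : Rp) : Prop :=
  forall g : Rp, divR g D -> divR g P -> g \is a GRing.unit.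

Definition eqmodR (A B : Kf) (P : Rp) : Prop :=
  exists C D : Rp, D != 0 /\ coprimeR D P /\
    A - B = tofrac P * tofrac C / tofrac D.

(* Main.v *)
Require Import Defs.
From HB Require Import structures.
From mathcomp Require Import all_boot all_order all_algebra.
From Stdlib Require Import Lia.
From mathcomp Require Import ring lra zify.
Import GRing.Theory.
Local Open Scope ring_scope.

Module Aux.
Set Implicit Arguments. Unset Strict Implicit. Unset Printing Implicit Defensive.

Arguments qpoch : simpl never.

Section Gen.
Variable F : fieldType.

Lemma qp0 (y r : F) : qpoch y r 0 = 1.
Proof. by rewrite /qpoch big_ord0. Qed.

Lemma qpS (y r : F) k : qpoch y r k.+1 = qpoch y r k * (1 - y * r ^+ k).
Proof. by rewrite /qpoch big_ord_recr. Qed.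

Lemma qpSl (y r : F) k : qpoch y r k.+1 = (1 - y) * qpoch (y * r) r k.
Proof.
rewrite /qpoch big_ord_recl expr0 mulr1; congr (_ * _).
by apply: eq_bigr => i _; rewrite /bump /= exprS mulrA.
Qed.

Lemma qp_add (y r : F) j l : qpoch y r (j + l) = qpoch y r j * qpoch (y * r ^+ j) r l.
Proof.
rewrite /qpoch big_split_ord /=; congr (_ * _).
by apply: eq_bigr => i _; rewrite exprD mulrA.
Qed.

Lemma qp_zero (y r : F) k i : (i < k)%N -> y * r ^+ i = 1 -> qpoch y r k = 0.
Proof.
move=> ik h; rewrite /qpoch (bigD1 (Ordinal ik)) //= h subrr mul0r //.
Qed.

Lemma qp_neq0 (y r : F) k : (forall i, (i < k)%N -> y * r ^+ i != 1) -> qpoch y r k != 0.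
Proof.
move=> h; rewrite /qpoch; apply/prodf_neq0 => i _; rewrite subr_eq0 eq_sym; exact: h.
Qed.


Lemma qp_neq0_le (y r : F) k K : (k <= K)%N -> qpoch y r K != 0 -> qpoch y r k != 0.
Proof.
move=> kK; rewrite -(subnKC kK) qp_add mulf_eq0 negb_or => /andP[] //.
Qed.

Variable q : F.
Hypothesis q0 : q != 0.
Hypothesis hq : forall k, (0 < k)%N -> q ^+ k != 1.

Lemma qq_neq0 k : qpoch q q k != 0.
Proof. apply: qp_neq0 => i _; rewrite -exprS; exact: hq. Qed.

Definition uu N l := qpoch (q^-1 ^+ N) q l * q ^+ l / qpoch q q l.

Lemma uu0 N : uu N 0 = 1.
Proof. by rewrite /uu !qp0 expr0 mulr1 divr1. Qed.

Lemma uuS N l : uu N.+1 l.+1 = uu N l.+1 - q^-1 ^+ N * uu N l.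
Proof.
rewrite /uu (qpSl (q^-1 ^+ N.+1)) (qpS (q^-1 ^+ N)) (qpS q).
have e : q^-1 ^+ N.+1 * q = q^-1 ^+ N by rewrite exprSr -mulrA mulVf // mulr1.
rewrite e.
have h1 := qq_neq0 l.
have h2 : 1 - q * q ^+ l != 0 by rewrite subr_eq0 eq_sym -exprS; exact: hq.
rewrite exprSr exprS.
set A := qpoch _ q l; set Q := qpoch q q l; set z := q^-1 ^+ N; set X := q ^+ l.
field; by rewrite h1 h2 q0.
Qed.

Definition Phi N (b c : F) := (\prod_(i < N) (b - c * q ^+ i)) / qpoch c q N.

Lemma qCV N : forall K b c, (N < K)%N -> qpoch c q K != 0 ->
  \sum_(l < K) uu N l * (qpoch b q l / qpoch c q l) = Phi N b c.
Proof.
elim: N => [|N IH] K b c NK hc.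
  rewrite /Phi big_ord0 qp0 divr1.
  case: K NK hc => // K _ hc.
  rewrite big_ord_recl uu0 !qp0 divr1 mulr1 big1 ?addr0 // => i _.
  by rewrite /uu qpSl expr0 subrr !mul0r.
case: K NK hc => // K NK hc.
have hc' : qpoch (c * q) q K != 0 /\ 1 - c != 0.
  by move: hc; rewrite qpSl mulf_eq0 negb_or => /andP[].
case: hc' => hcq h1c.
have hcK : qpoch c q K != 0.
  by move: hc; rewrite qpS mulf_eq0 negb_or => /andP[].
rewrite big_ord_recl uu0 !qp0 divr1 mul1r.
under eq_bigr => i _ do rewrite /bump /= uuS mulrBl.
rewrite sumrB.
have E1 : 1 + \sum_(i < K) uu N i.+1 * (qpoch b q i.+1 / qpoch c q i.+1) =
  \sum_(l < K.+1) uu N l * (qpoch b q l / qpoch c q l).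
  by rewrite big_ord_recl uu0 !qp0 divr1 mul1r.
have E2 : \sum_(i < K) q^-1 ^+ N * uu N i * (qpoch b q i.+1 / qpoch c q i.+1) =
  q^-1 ^+ N * ((1 - b) / (1 - c)) * \sum_(l < K) uu N l * (qpoch (b * q) q l / qpoch (c * q) q l).
  rewrite mulr_sumr; apply: eq_bigr => i _; rewrite !qpSl.
  field. by rewrite h1c (qp_neq0_le (ltnW (ltn_ord i)) hcq).
rewrite addrA E1 E2 !IH //; last by apply: ltnW.
rewrite /Phi big_ord_recr /=.
have eP : \prod_(i < N) (b * q - c * q * q ^+ i) = q ^+ N * \prod_(i < N) (b - c * q ^+ i).
  have -> : q ^+ N = \prod_(i < N) q by rewrite prodr_const card_ord.
  rewrite -big_split /=.
  by apply: eq_bigr => i _; ring.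
have eQ : qpoch (c * q) q N = qpoch c q N * (1 - c * q ^+ N) / (1 - c).
  apply: (mulfI h1c); rewrite -qpSl qpS; field; exact: h1c.
have hcN : qpoch c q N.+1 != 0 by exact: (qp_neq0_le (ltnW NK) hc).
move: (hcN); rewrite qpS mulf_eq0 negb_or => /andP[hN1 hN2].
rewrite eP eQ exprVn.


field. by rewrite hN1 hN2 h1c expf_neq0.
Qed.

Fixpoint beta (k j : nat) : F :=
  match k with
  | 0 => (j == 0%N)%:R
  | k'.+1 => beta k' j - q ^+ k' * (if j is j'.+1 then beta k' j' else 0)
  end.

Lemma beta_zero k j : (k < j)%N -> beta k j = 0.
Proof.
elim: k j => [|k IH] [|j] //= hj.
by rewrite !IH ?mulr0 ?subr0 // ltnW.
Qed.

Lemma qbin k K x : (k < K)%N -> qpoch x q k = \sum_(j < K) beta k j * x ^+ j.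
Proof.
elim: k K => [|k IH] K hK.
  case: K hK => // K _; rewrite qp0 big_ord_recl big1 ?addr0.
    by rewrite /= mulr1n expr0 mulr1.
  by move=> i _; rewrite /= mul0r.
rewrite qpS (IH K (ltnW hK)) /=.
symmetry; under eq_bigr => j _ do rewrite mulrBl.
rewrite sumrB mulrBr mulr1; congr (_ - _).
case: K hK => // K hK.
rewrite big_ord_recl /= mulr0 mul0r add0r mulr_suml big_ord_recr /=.
rewrite beta_zero // mul0r mul0r addr0; apply: eq_bigr => i _.
by rewrite /bump /= exprS; ring.
Qed.

Lemma qq_S k : qpoch q q k.+1 = qpoch q q k * (1 - q * q ^+ k).
Proof. exact: qpS. Qed.

Lemma q1_neq0 k : 1 - q * q ^+ k != 0.
Proof. by rewrite subr_eq0 eq_sym -exprS hq. Qed.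

Lemma beta_cf k j : (j <= k)%N ->
  beta k j = (-1) ^+ j * q ^+ 'C(j, 2) * qpoch q q k / (qpoch q q j * qpoch q q (k - j)).
Proof.
elim: k j => [|k IH] j hj.
  by case: j hj => //= _; rewrite !qp0 expr0 !mul1r invr1.
have hk := qq_neq0 k.
case: j hj => [|j] hj /=.
  rewrite IH // !subn0 !qp0 !expr0 !mul1r mulr0 subr0 divff // divff //; exact: qq_neq0.
move: hj; rewrite ltnS leq_eqVlt => /orP[/eqP ->|jk].
  rewrite beta_zero // sub0r subnn (IH k) // subnn !qp0 mulr1 binS bin1 exprD.
  rewrite exprS; field; rewrite hk.
  rewrite andbT; exact: qq_neq0.
rewrite (IH j.+1 jk) (IH j (ltnW jk)) subSS.
set s := (k - j.+1)%N.
have ek : k = (j.+1 + s)%N by rewrite subnKC.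
have e1 : (k - j = s.+1)%N by rewrite ek addSn subSn ?leq_addr// addKn.
rewrite e1 !qq_S binS bin1 exprD exprS.
have eq : q ^+ k = q ^+ j * q * q ^+ s by rewrite ek addSn exprS exprD; ring.
rewrite eq.
have hj := qq_neq0 j; have hs := qq_neq0 s.
have h1 := q1_neq0 j; have h2 := q1_neq0 s; have h3 := q1_neq0 k.
rewrite eq in h3.
field. by rewrite hj hs h1 h2.
Qed.

Definition ee m k := qpoch (q^-1 ^+ m) q k * qpoch (q ^+ m.+1) q k / (qpoch q q k) ^+ 2.

Lemma qinv_m m : q^-1 ^+ m * q ^+ m = 1.
Proof. by rewrite exprVn mulVf // expf_neq0. Qed.

Lemma ee_zero m k : (m < k)%N -> ee m k = 0.
Proof. by move=> mk; rewrite /ee (qp_zero mk (qinv_m m)) !mul0r. Qed.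

Lemma sign2 n : (-1) ^+ n * (-1) ^+ n = 1 :> F.
Proof. by rewrite -exprMn mulrNN mulr1 expr1n. Qed.

Lemma prod_neg_pow j N : \prod_(i < N) (- q ^+ (j.+1 + i)) = (-1) ^+ N * q ^+ (N * j.+1 + 'C(N, 2)).
Proof.
elim: N => [|N IH]; first by rewrite big_ord0 expr0 mul1r.
rewrite big_ord_recr /= IH binS bin1 exprS.
have -> : (N.+1 * j.+1 + ('C(N, 2) + N) = (N * j.+1 + 'C(N, 2)) + (j.+1 + N))%N.
  by rewrite mulSn; lia.
by rewrite [in RHS]exprD; ring.
Qed.

Lemma binom_id j N : ('C(j, 2) + j + (N * j.+1 + 'C(N, 2)) = 'C((j + N).+1, 2))%N.
Proof.
elim: N => [|N IH]; first by rewrite mul0n add0n bin0n addn0 addn0 binS bin1.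
rewrite addnS (binS (j + N).+1) bin1 -IH binS bin1 mulSn; lia.
Qed.

Lemma prod_bc j N :
  \prod_(i < N) (q ^+ (j + N).+1 * q ^+ j - q * q ^+ j * q ^+ i)
  = (-1) ^+ N * q ^+ (N * j.+1 + 'C(N, 2)) * qpoch (q * q ^+ j) q N.
Proof.
rewrite -prod_neg_pow /qpoch.
rewrite [X in _ = _ * X](reindex_inj rev_ord_inj) /= -big_split /=.
apply: eq_bigr => i _.
have hi := ltn_ord i.
have e1 : ((j + N).+1 + j = (j.+1 + i) + (j + (N - i.+1)).+1)%N by lia.
rewrite -exprD e1 exprD.
have -> : q * q ^+ j * q ^+ (N - i.+1) = q ^+ (j + (N - i.+1)).+1 by rewrite exprS exprD mulrA.
have -> : q * q ^+ j * q ^+ i = q ^+ (j.+1 + i) by rewrite exprD exprS.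
ring.
Qed.


Lemma qc_neq0 j K : qpoch (q * q ^+ j) q K != 0.
Proof.
apply: qp_neq0 => i _; rewrite -exprS -exprD; exact: hq.
Qed.

Lemma coef_id j N K : (j + N < K)%N ->
  (-1) ^+ (j + N) / q ^+ 'C((j + N).+1, 2) *
    \sum_(k < K) ee (j + N) k * q ^+ k * beta k j = ee (j + N) j.
Proof.
move=> hK.
have jK : (j <= K)%N by lia.
rewrite -(subnKC jK) big_split_ord /= big1 ?add0r; last first.
  by move=> i _; rewrite beta_zero ?mulr0.
set b := q ^+ (j + N).+1 * q ^+ j; set c := q * q ^+ j.
have T : forall l, ee (j + N) (j + l) * q ^+ (j + l) * beta (j + l) j =
   ee (j + N) j * ((-1) ^+ j * q ^+ 'C(j, 2) * q ^+ j) *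
   (uu N l * (qpoch b q l / qpoch c q l)).
  move=> l; rewrite (beta_cf (leq_addr l j)) addKn /ee /uu !qp_add.
  have -> : q^-1 ^+ (j + N) * q ^+ j = q^-1 ^+ N.
    by rewrite addnC exprD -mulrA qinv_m mulr1.
  rewrite (exprD q j l).
  have h1 := qq_neq0 j; have h2 := qq_neq0 l; have h3 := qc_neq0 j l.
  rewrite -/b -/c.
  field. by rewrite h1 h2 h3.
under eq_bigr => l _ do rewrite T.
rewrite -mulr_sumr qCV; last first.
- exact: qc_neq0.
- lia.
rewrite /Phi prod_bc -binom_id.
have h := qc_neq0 j N.
rewrite -/c exprD.
have s2 := sign2 j; have s3 := sign2 N.
rewrite !exprD.
transitivity ((-1) ^+ j * (-1) ^+ j * ((-1) ^+ N * (-1) ^+ N) * ee (j + N) j); last by rewrite s2 s3 !mul1r.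
field. by rewrite h !expf_neq0.
Qed.


Lemma core m K x : (m < K)%N ->
  \sum_(k < K) ee m k * x ^+ k =
  (-1) ^+ m / q ^+ 'C(m.+1, 2) * \sum_(k < K) ee m k * q ^+ k * qpoch x q k.
Proof.
move=> mK.
have E : forall k : 'I_K, ee m k * q ^+ k * qpoch x q k =
    \sum_(j < K) ee m k * q ^+ k * beta k j * x ^+ j.
  move=> k; rewrite (qbin _ (ltn_ord k)) mulr_sumr; apply: eq_bigr => j _; ring.
rewrite (eq_bigr _ (fun k _ => E k)) exchange_big mulr_sumr /=.
apply: eq_bigr => j _.
rewrite -mulr_suml mulrA.
case: (leqP (j : nat) m) => hj.
  have em : m = (j + (m - j))%N by rewrite subnKC.
  by rewrite [in LHS]em -(coef_id (K := K)) -?em.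
rewrite ee_zero // mul0r big1 ?mulr0 ?mul0r //.
move=> k _.
case: (leqP (k : nat) m) => hk.
  by rewrite beta_zero ?mulr0 //; apply: leq_ltn_trans hj.
by rewrite ee_zero ?mul0r.
Qed.

End Gen.

Lemma fq_neq0 : fq != 0.
Proof.
rewrite /fq tofrac_eq0 /pq polyC_eq0 -size_poly_eq0 size_polyX //.
Qed.

Lemma fa_neq0 : fa != 0.
Proof.
rewrite /fa tofrac_eq0 /pa !polyC_eq0 -size_poly_eq0 size_polyX //.
Qed.

Lemma fqX_neq1 k : (0 < k)%N -> fq ^+ k != 1.
Proof.
move=> hk; rewrite /fq -rmorphXn -tofrac1 tofrac_eq /pq -rmorphXn /=.
rewrite -(rmorph1 (@polyC _)) (inj_eq polyC_inj).
apply/negP => /eqP h.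
have := @size_polyXn {poly rat} k.
by rewrite h size_poly1 => -[] hk0; rewrite -hk0 in hk.
Qed.

Fact Dz_key : unit. Proof. exact: tt. Qed.
Definition Dz (n : nat) : Rp := locked_with Dz_key (pa * pq * \prod_(i < n) (1 - pq ^+ 2 * (pq ^+ 2) ^+ i)).

Lemma FDz n : tofrac (Dz n) = fa * fq * qpoch (fq ^+ 2) (fq ^+ 2) n.
Proof.
rewrite /Dz unlock !rmorphM rmorph_prod /=; congr (_ * _).
by apply: eq_bigr => i _; rewrite rmorphB rmorph1 rmorphM !rmorphXn.
Qed.

Section Good.
Variable n : nat.
Definition Good (r : Kf) := exists c : Rp, exists j : nat, r * tofrac (Dz n) ^+ j = tofrac c.

Lemma good_tofrac c : Good (tofrac c).
Proof. by exists c, 0%N; rewrite expr0 mulr1. Qed.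

Lemma good1 : Good 1.
Proof. by rewrite -tofrac1; apply: good_tofrac. Qed.

Lemma good_add u v : Good u -> Good v -> Good (u + v).
Proof.
move=> [c1 [j1 h1]] [c2 [j2 h2]]; exists (c1 * Dz n ^+ j2 + c2 * Dz n ^+ j1), (j1 + j2)%N.
by rewrite tofracD !tofracM !tofracXn -h1 -h2 exprD; ring.
Qed.

Lemma good_mul u v : Good u -> Good v -> Good (u * v).
Proof.
move=> [c1 [j1 h1]] [c2 [j2 h2]]; exists (c1 * c2), (j1 + j2)%N.
by rewrite tofracM -h1 -h2 exprD; ring.
Qed.

Lemma good_opp u : Good u -> Good (- u).
Proof.
move=> [c [j h]]; exists (- c), j.
by rewrite tofracN -h; ring.
Qed.

Lemma good_sub u v : Good u -> Good v -> Good (u - v).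
Proof. by move=> hu hv; apply: good_add => //; apply: good_opp. Qed.

Lemma good_exp u k : Good u -> Good (u ^+ k).
Proof.
move=> hu; elim: k => [|k IH]; first by rewrite expr0; exact: good1.
by rewrite exprS; apply: good_mul.
Qed.

Lemma good_prod k (F : 'I_k -> Kf) : (forall i, Good (F i)) -> Good (\prod_(i < k) F i).
Proof.
move=> h; apply: (big_ind Good) => //; [exact: good1 | exact: good_mul].
Qed.

Lemma good_sum k (F : 'I_k -> Kf) : (forall i, Good (F i)) -> Good (\sum_(i < k) F i).
Proof.
move=> h; apply: (big_ind Good) => //; [rewrite -tofrac0; exact: good_tofrac | exact: good_add].
Qed.

Lemma good_inv f g : f != 0 -> Good g -> tofrac (Dz n) = f * g -> Good f^-1.
Proof.
move=> f0 [c [j h]] e; exists c, j.+1.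
rewrite exprS mulrA {1}e mulrA mulVf // mul1r; exact: h.
Qed.

Lemma good_fa : Good fa. Proof. exact: (good_tofrac pa). Qed.
Lemma good_fq : Good fq. Proof. exact: (good_tofrac pq). Qed.
Lemma good_fx : Good fx. Proof. exact: (good_tofrac px). Qed.

Lemma good_qp y r k : Good y -> Good r -> Good (qpoch y r k).
Proof.
move=> hy hr; rewrite /qpoch; apply: good_prod => i.
apply: good_sub; first exact: good1.
apply: good_mul => //; exact: good_exp.
Qed.

Lemma good_fa_inv : Good fa^-1.
Proof.
apply: (good_inv fa_neq0 (g := fq * qpoch (fq ^+ 2) (fq ^+ 2) n)); last by rewrite FDz mulrA.
by apply: good_mul; [exact: good_fq | apply: good_qp; apply: good_exp; exact: good_fq].
Qed.

Lemma good_fq_inv : Good fq^-1.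
Proof.
apply: (good_inv fq_neq0 (g := fa * qpoch (fq ^+ 2) (fq ^+ 2) n)); last by rewrite FDz; ring.
by apply: good_mul; [exact: good_fa | apply: good_qp; apply: good_exp; exact: good_fq].
Qed.

Lemma p_hq k : (0 < k)%N -> (fq ^+ 2) ^+ k != 1.
Proof. by move=> hk; rewrite -exprM fqX_neq1 // muln_gt0. Qed.

Lemma p_neq0 : fq ^+ 2 != 0.
Proof. by rewrite expf_neq0 // fq_neq0. Qed.

Lemma good_qq_inv k : (k <= n)%N -> Good (qpoch (fq ^+ 2) (fq ^+ 2) k)^-1.
Proof.
move=> kn.
have hp := good_exp 2 good_fq.
have hq := qq_neq0 p_hq k.
apply: (@good_inv _ (fa * fq * qpoch (fq ^+ 2 * (fq ^+ 2) ^+ k) (fq ^+ 2) (n - k)) hq).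
  by apply: good_mul; [apply: good_mul; [exact: good_fa|exact: good_fq] | apply: good_qp => //; apply: good_mul => //; apply: good_exp].
by rewrite FDz -{1}(subnKC kn) qp_add; ring.
Qed.

Variable d : Kf.
Definition Rel u v := exists g, Good g /\ u - v = d * g.

Lemma rel_refl u : Rel u u.
Proof. by exists 0; split; [rewrite -tofrac0; exact: good_tofrac | rewrite subrr mulr0]. Qed.

Lemma rel_add u v u' v' : Rel u v -> Rel u' v' -> Rel (u + u') (v + v').
Proof.
move=> [g [hg e]] [g' [hg' e']]; exists (g + g'); split; first exact: good_add.
by rewrite mulrDr -e -e'; ring.
Qed.

Lemma rel_mul u v u' v' : Rel u v -> Rel u' v' -> Good u' -> Good v -> Rel (u * u') (v * v').
Proof.
move=> [g [hg e]] [g' [hg' e']] hu' hv; exists (g * u' + v * g'); split.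
  by apply: good_add; apply: good_mul.
by rewrite mulrDr mulrA -e mulrCA -e'; ring.
Qed.

Lemma rel_sum k (F G : 'I_k -> Kf) : (forall i, Rel (F i) (G i)) -> Rel (\sum_(i < k) F i) (\sum_(i < k) G i).
Proof.
move=> h; elim: k F G h => [|k IH] F G h; first by rewrite !big_ord0; apply: rel_refl.
by rewrite !big_ord_recr /=; apply: rel_add => //; apply: IH.
Qed.

Lemma rel_prod k (F G : 'I_k -> Kf) : (forall i, Rel (F i) (G i)) ->
  (forall i, Good (F i)) -> (forall i, Good (G i)) -> Rel (\prod_(i < k) F i) (\prod_(i < k) G i).
Proof.
move=> h hF hG; elim: k F G h hF hG => [|k IH] F G h hF hG; first by rewrite !big_ord0; apply: rel_refl.
rewrite !big_ord_recr /=; apply: rel_mul => //; first by apply: IH.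
by apply: good_prod.
Qed.

End Good.

Section G2.
Variable F : fieldType.
Definition Ctg (q T : F) k := \prod_(i < k) (1 - q * (q ^+ 2) ^+ i * T + q ^+ 2 * ((q ^+ 2) ^+ i) ^+ 2).

Lemma Ct_tg (a q : F) k : a != 0 ->
  qpoch (a * q) (q ^+ 2) k * qpoch (q / a) (q ^+ 2) k = Ctg q (a + a^-1) k.
Proof.
move=> h; rewrite /qpoch /Ctg -big_split /=; apply: eq_bigr => i _.
field; exact: h.
Qed.
End G2.

Section G3.
Variable F : fieldType.
Variables (a q x : F) (m n : nat).
Hypotheses (a0 : a != 0) (q0 : q != 0) (hq : forall k, (0 < k)%N -> q ^+ k != 1).
Hypothesis en : n = (m.*2).+1.

Local Notation p := (q ^+ 2).
Local Notation t := (a + a^-1).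
Local Notation t0 := (q ^+ n + (q ^+ n)^-1).
Definition WW k := (qpoch p p k ^+ 2)^-1 * x ^+ k.
Definition WW' k := (qpoch p p k ^+ 2)^-1 * q ^+ (2 * k) * qpoch x p k.

Lemma G_sumL : \sum_(k < n) qpoch (a * q) p k * qpoch (q / a) p k / (qpoch p p k) ^+ 2 * x ^+ k
  = \sum_(k < n) Ctg q t k * WW k.
Proof.
apply: eq_bigr => k _; rewrite -Ct_tg // /WW; ring.
Qed.

Lemma G_sumR : \sum_(k < n) qpoch (a * q) p k * qpoch (q / a) p k / (qpoch p p k) ^+ 2 * q ^+ (2 * k) * qpoch x p k
  = \sum_(k < n) Ctg q t k * WW' k.
Proof.
apply: eq_bigr => k _; rewrite -Ct_tg // /WW'; ring.
Qed.

Lemma p0 : p != 0. Proof. by rewrite expf_neq0. Qed.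
Lemma phq k : (0 < k)%N -> p ^+ k != 1.
Proof. by move=> hk; rewrite -exprM hq // muln_gt0. Qed.

Lemma Ct_t0g k : Ctg q t0 k = qpoch (p^-1 ^+ m) p k * qpoch (p ^+ m.+1) p k.
Proof.
rewrite /qpoch /Ctg -big_split /=; apply: eq_bigr => i _.
have e : q ^+ n = q * p ^+ m by rewrite en exprS -mul2n exprM.
rewrite e exprVn (exprS p m).
field. by rewrite q0 !expf_neq0.
Qed.

Lemma G_core : \sum_(k < n) Ctg q t0 k * WW k =
  (-1) ^+ m * (q ^+ (2 * 'C(m.+1, 2)))^-1 * \sum_(k < n) Ctg q t0 k * WW' k.
Proof.
have mn : (m < n)%N by rewrite en ltnS -addnn leq_addr.
have E1 : \sum_(k < n) Ctg q t0 k * WW k = \sum_(k < n) ee p m k * x ^+ k.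
  by apply: eq_bigr => k _; rewrite Ct_t0g /WW /ee; ring.
have E2 : \sum_(k < n) Ctg q t0 k * WW' k = \sum_(k < n) ee p m k * p ^+ k * qpoch x p k.
  by apply: eq_bigr => k _; rewrite Ct_t0g /WW' /ee exprM; ring.
by rewrite E1 E2 (core p0 phq x mn) exprM.
Qed.

Lemma G_d : t - t0 = - ((1 - a * q ^+ n) * (a - q ^+ n)) / (a * q ^+ n).
Proof. field. by rewrite a0 expf_neq0. Qed.

Lemma G_fac i : (1 - q * p ^+ i * t + p * (p ^+ i) ^+ 2) - (1 - q * p ^+ i * t0 + p * (p ^+ i) ^+ 2)
  = (t - t0) * (- (q * p ^+ i)).
Proof. ring. Qed.

End G3.

Import Order.TTheory Num.Theory.

Lemma L_Xpow (c : rat) j : c != 0 -> forall (f h : {poly rat}) (e : rat), e != 0 ->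
  h * f = ('X * c%:P) ^+ j * e%:P -> f.[0] != 0 -> size f = 1%N.
Proof.
move=> c0; elim: j => [|j IH] f h e e0 hf f0.
  have := size_mul_eq1 h f; rewrite hf expr0 mul1r size_polyC e0 eqxx.
  by move/esym/andP => [_ /eqP].
have h0 : root h 0.
  have := congr1 (fun p => p.[0]) hf; rewrite /= hornerM exprS !hornerM hornerX mul0r !mul0r.
  by move/eqP; rewrite mulf_eq0 (negbTE f0) orbF.
have [h' eh] := factor_theorem h 0 h0 => {h0}.
rewrite subr0 in eh; rewrite eh in hf.
apply: (IH f h' (c * e)) => //; first by rewrite mulf_neq0.
apply: (@mulIf _ 'X); first by rewrite polyX_eq0.
rewrite -mulrA (mulrC f) mulrA hf exprSr polyCM; ring.
Qed.

Lemma coef_hornerC (p : {poly {poly rat}}) (s : rat) r :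
  (p.[s%:P])`_r = (map_poly (fun c : {poly rat} => c`_r) p).[s].
Proof.
rewrite horner_coef (horner_coef_wide (n := size p)); last exact: size_poly.
rewrite coef_sum; apply: eq_bigr => i _.
by rewrite -rmorphXn coefMC coef_map_id0 // coef0.
Qed.

Lemma poly_inf_roots (g : {poly rat}) : (forall k : nat, g.[(k + 2)%:R] = 0) -> g = 0.
Proof.
move=> h; apply/eqP; apply: contraT => g0.
have := max_poly_roots g0 (rs := [seq (k + 2)%:R | k <- iota 0 (size g)]).
rewrite size_map size_iota ltnn; apply.
  by apply/allP => z /mapP [k _ ->]; apply/eqP; exact: h.
rewrite map_inj_uniq ?iota_uniq // => a b /eqP.
by rewrite eqr_nat => /eqP; lia.
Qed.

Section R2.
Variable n : nat.
Local Notation R2 := {poly {poly rat}}.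
Definition A2 : R2 := ('X)%:P.
Definition Q2 : R2 := 'X.
Definition P0 : R2 := (1 - A2 * Q2 ^+ n) * (A2 - Q2 ^+ n).
Definition D0 : R2 := A2 * Q2 * \prod_(i < n) (1 - Q2 ^+ 2 * (Q2 ^+ 2) ^+ i).

Lemma P0_eval (s : rat) : (P0.[s%:P]).[0] = - s ^+ n.
Proof.
by rewrite /P0 /A2 /Q2 !hornerE.
Qed.

Lemma D0_eval (s : rat) :
  D0.[s%:P] = 'X * (s * \prod_(i < n) (1 - s ^+ 2 * (s ^+ 2) ^+ i))%:P.
Proof.
rewrite /D0 /A2 /Q2 !hornerE horner_prod polyCM rmorph_prod /= mulrA; congr (_ * _).
by apply: eq_bigr => i _; rewrite !hornerE rmorphB rmorph1 rmorphM !rmorphXn.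
Qed.

Lemma s_facts (k : nat) : let s := (k + 2)%:R : rat in
  s != 0 /\ s * \prod_(i < n) (1 - s ^+ 2 * (s ^+ 2) ^+ i) != 0.
Proof.
move=> s.
have s1 : 1 < s by rewrite /s ltr1n; lia.
have s0 : s != 0 by apply: lt0r_neq0; apply: lt_trans s1.
split => //; rewrite mulf_neq0 //; apply/prodf_neq0 => i _.
by rewrite subr_eq0 eq_sym -exprM -exprD gt_eqF // exprn_egt1.
Qed.


Lemma R2_cop (g0 h0 h1 : {poly {poly rat}}) j :
  P0 = h0 * g0 -> D0 ^+ j = h1 * g0 -> exists2 c : rat, c != 0 & g0 = (c%:P)%:P.
Proof.
move=> hP hD.
have Sa : forall k : nat, size (g0.[((k + 2)%:R : rat)%:P]) = 1%N.
  move=> k; have [s0 c0] := s_facts k.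
  move: s0 c0; set s := ((k + 2)%:R : rat); set c := s * _ => s0 c0.
  apply: (@L_Xpow c j c0 _ (h1.[s%:P]) 1) => //.
    by rewrite polyC1 mulr1 -hornerM -hD horner_exp D0_eval.
  apply/eqP => g00; have := P0_eval s; rewrite hP !hornerM g00 mulr0.
  by move/esym/eqP; rewrite oppr_eq0 expf_eq0 (negbTE s0) andbF.
have Sb : forall r, (0 < r)%N -> map_poly (fun c : {poly rat} => c`_r) g0 = 0.
  move=> r hr; apply: poly_inf_roots => k.
  by rewrite -coef_hornerC nth_default // Sa.
set G := map_poly (fun c : {poly rat} => c`_0) g0.
have eg : g0 = map_poly polyC G.
  apply/polyP => i; rewrite !coef_map_id0 ?coef0 //.
  apply: size1_polyC; apply/leq_sizeP => r hr.
  have := congr1 (fun p : {poly rat} => p`_i) (Sb r hr); rewrite /= coef_map_id0 ?coef0 //.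
have phiG : forall z : rat, map_poly (horner_eval z) g0 = G.
  move=> z; apply/polyP => i; rewrite eg !coef_map_id0 /=.
  all: try by rewrite /horner_eval hornerC.
  all: try by rewrite coef0.
  all: try by rewrite polyC0.
  all: try by rewrite /horner_eval horner0.
have e0 : map_poly (horner_eval 0) P0 = map_poly (horner_eval 0) h0 * G.
  by rewrite hP rmorphM /= phiG.
have e1 : map_poly (horner_eval 1) P0 = map_poly (horner_eval 1) h0 * G.
  by rewrite hP rmorphM /= phiG.
move: e0 e1; rewrite /P0 /A2 /Q2 !(rmorphB, rmorphM, rmorph1, rmorphXn) /= !map_polyX !map_polyC /= /horner_eval !hornerX.
rewrite polyC0 polyC1 mul0r mul1r subr0 sub0r.
set u0 := map_poly _ h0; set u1 := map_poly _ h0 => e0 e1.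
have e : (u1 - u0 * (2%:R - 'X^n)) * G = 1.
  by rewrite mulrBl -e1 mulrAC -e0; ring.
have := size_mul_eq1 (u1 - u0 * (2%:R - 'X^n)) G.
rewrite e size_poly1 eqxx => /esym/andP [_ /size_poly1P [c c0 eG]].
by exists c => //; rewrite eg eG map_polyC.
Qed.

End R2.

Lemma P0_neq0 n : P0 n != 0.
Proof.
apply/eqP => h; have := P0_eval n 2; rewrite h horner0 hornerC => /eqP.
by rewrite eq_sym oppr_eq0 expf_eq0 andbC.
Qed.

Lemma coprime_Dz n j : coprimeR (Dz n ^+ j) ((1 - pa * pq ^+ n) * (pa - pq ^+ n)).
Proof.
move=> g [h1 hD] [h0 hP].
have eP : (1 - pa * pq ^+ n) * (pa - pq ^+ n) = (P0 n)%:P.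
  by rewrite /P0 /pa /pq /A2 /Q2 !(rmorphM, rmorphB, rmorph1, rmorphXn).
have eD : Dz n = (D0 n)%:P.
  by rewrite /Dz unlock /D0 /pa /pq /A2 /Q2 !(rmorphM, rmorph_prod); congr (_ * _);
     apply: eq_bigr => i _; rewrite !(rmorphB, rmorph1, rmorphM, rmorphXn).
rewrite eP in hP; rewrite eD -rmorphXn in hD.
have := size_mul_eq1 h0 g; rewrite -hP size_polyC P0_neq0 eqxx.
move=> /esym/andP [/size_poly1P [a0 _ eh0] /size_poly1P [g0 _ eg]].
rewrite eh0 eg -polyCM in hP; move/polyC_inj: hP => hP.
have hD' : D0 n ^+ j = h1`_0 * g0.
  by have := congr1 (fun p : Rp => p`_0) hD; rewrite /= coefC eqxx eg coefMC.
have [c c0 eg0] := R2_cop hP hD'.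
rewrite eg eg0 poly_unitE size_polyC coefC /= poly_unitE size_polyC coefC /=.
rewrite poly_unitE size_polyC coefC /= !polyC_eq0 c0 /= unitfE c0.
by [].
Qed.



Lemma fin_alg (F : fieldType) (A A0 S S0 g1 g2 lam d P' u : F) :
  A - A0 = d * g1 -> S - S0 = d * g2 -> A0 = lam * S0 -> d = - P' / u ->
  A - lam * S = P' * (- (g1 - lam * g2) / u).
Proof.
move=> h1 h2 h3 h4.
have -> : A = A0 + d * g1 by rewrite -h1; ring.
have -> : S = S0 + d * g2 by rewrite -h2; ring.
rewrite h3 h4; ring.
Qed.

Lemma fin_div (F : fieldType) (G c D : F) : D != 0 -> G * D = c -> G = c / D.
Proof. by move=> hD <-; rewrite mulfK. Qed.

Lemma Dz_neq0 n : Dz n != 0.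
Proof.
have h : tofrac (Dz n) != 0.
  rewrite FDz; apply: mulf_neq0; first by apply: mulf_neq0; [exact: fa_neq0 | exact: fq_neq0].
  exact: (qq_neq0 p_hq).
by apply: contra h => /eqP ->; rewrite tofrac0.
Qed.

Lemma odd_m n : odd n -> n = (((n - 1)./2).*2).+1.
Proof.
move=> h; have e : n = (n./2).*2.+1 by rewrite -{1}(odd_double_half n) h.
have -> : ((n - 1)./2 = n./2)%N by rewrite {1}e subn1 /= doubleK.
exact e.
Qed.

Lemma e4_lem n : odd n -> ((n * n - 1) %/ 4 = 2 * 'C(((n - 1)./2).+1, 2))%N.
Proof.
move=> hodd; have en := odd_m hodd.
move: en; set m := ((n - 1)./2)%N => en.
have h2 : (2 * 'C(m.+1, 2) = m.+1 * m)%N.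
  elim: (m) => [|k IH] //; rewrite binS bin1; lia.
rewrite h2 en.
have -> : ((m.*2).+1 * (m.*2).+1 - 1 = 4 * (m.+1 * m))%N by rewrite -muln2; lia.
by rewrite mulKn.
Qed.


Section KfRel.
Variable n : nat.
Local Notation t := (fa + fa^-1).
Local Notation t0 := (fq ^+ n + fq ^- n).
Local Notation d := (t - t0).

Lemma gfqX k : Good n (fq ^+ k).
Proof. apply: good_exp; exact: good_fq. Qed.
Lemma gpX i : Good n ((fq ^+ 2) ^+ i).
Proof. rewrite -exprM; exact: gfqX. Qed.
Lemma gpiX i : Good n (fq ^+ 2 * ((fq ^+ 2) ^+ i) ^+ 2).
Proof. apply: good_mul; [exact: gfqX | apply: good_exp; exact: gpX]. Qed.
Lemma gqpi i : Good n (fq * (fq ^+ 2) ^+ i).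
Proof. apply: good_mul; [exact: good_fq | exact: gpX]. Qed.

Lemma good_t : Good n t.
Proof. apply: good_add; [exact: good_fa | exact: good_fa_inv]. Qed.

Lemma good_t0 : Good n t0.
Proof.
apply: good_add; first by apply: good_exp; exact: good_fq.
rewrite -exprVn; apply: good_exp; exact: good_fq_inv.
Qed.

Lemma good_Ct T k : Good n T -> Good n (Ctg fq T k).
Proof.
move=> hT; apply: good_prod => i.
apply: good_add; last exact: gpiX.
apply: good_sub; first exact: good1.
by apply: good_mul => //; apply: gqpi.
Qed.

Lemma rel_Ct k : Rel n d (Ctg fq t k) (Ctg fq t0 k).
Proof.
apply: rel_prod => i.
- exists (- (fq * (fq ^+ 2) ^+ i)); split; last exact: G_fac.
  apply: good_opp; exact: gqpi.
- apply: good_add; last exact: gpiX.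
  apply: good_sub; first exact: good1.
  apply: good_mul; [exact: gqpi | exact: good_t].
- apply: good_add; last exact: gpiX.
  apply: good_sub; first exact: good1.
  apply: good_mul; [exact: gqpi | exact: good_t0].
Qed.

Lemma good_WW k : (k <= n)%N -> Good n (WW fq fx k).
Proof.
move=> kn; rewrite /WW -exprVn; apply: good_mul; last by apply: good_exp; exact: good_fx.
by apply: good_exp; exact: good_qq_inv.
Qed.

Lemma good_WW' k : (k <= n)%N -> Good n (WW' fq fx k).
Proof.
move=> kn; rewrite /WW' -exprVn; apply: good_mul.
  apply: good_mul; first by apply: good_exp; exact: good_qq_inv.
  exact: gfqX.
apply: good_qp; first exact: good_fx.
exact: gfqX.
Qed.

Lemma rel_sumW (W : nat -> Kf) : (forall k, (k <= n)%N -> Good n (W k)) ->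
  Rel n d (\sum_(k < n) Ctg fq t k * W k) (\sum_(k < n) Ctg fq t0 k * W k).
Proof.
move=> hW; apply: rel_sum => k; apply: rel_mul.
- exact: rel_Ct.
- exact: rel_refl.
- by apply: hW; apply: ltnW.
- apply: good_Ct; exact: good_t0.
Qed.

Lemma good_sumW (W : nat -> Kf) : (forall k, (k <= n)%N -> Good n (W k)) ->
  Good n (\sum_(k < n) Ctg fq t k * W k).
Proof.
move=> hW; apply: good_sum => k; apply: good_mul; first by apply: good_Ct; exact: good_t.
by apply: hW; apply: ltnW.
Qed.
End KfRel.


End Aux.
Import Aux.

Theorem theorem4p2 (n : nat) (hn0 : (0 < n)%N) (hodd : odd n) :
  eqmodR
    (\sum_(k < n)
       qpoch (fa * fq) (fq ^+ 2) k * qpoch (fq / fa) (fq ^+ 2) k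
       / (qpoch (fq ^+ 2) (fq ^+ 2) k) ^+ 2 * fx ^+ k)
    ((-1) ^+ ((n - 1)./2) * fq ^- ((n * n - 1) %/ 4) *
     \sum_(k < n)
       qpoch (fa * fq) (fq ^+ 2) k * qpoch (fq / fa) (fq ^+ 2) k
       / (qpoch (fq ^+ 2) (fq ^+ 2) k) ^+ 2 * fq ^+ (2 * k)
       * qpoch fx (fq ^+ 2) k)
    ((1 - pa * pq ^+ n) * (pa - pq ^+ n)).
Proof.
rewrite (G_sumL fq fx n fa_neq0) (G_sumR fq fx n fa_neq0) (e4_lem hodd).
have en := odd_m hodd.
move: en; set m := ((n - 1)./2)%N => en.
have hq : forall k, (0 < k)%N -> fq ^+ k != 1 by move=> k hk; exact: fqX_neq1.
have core := G_core fx fq_neq0 hq en.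
have [g1 [hg1 e1]] := rel_sumW (good_WW (n := n)).
have [g2 [hg2 e2]] := rel_sumW (good_WW' (n := n)).
have hd := G_d n fa_neq0 fq_neq0.
have hAB := fin_alg e1 e2 core hd.
set lam := (-1) ^+ m / fq ^+ (2 * 'C(m.+1, 2)) in hAB *.
have glam : Good n lam.
  apply: good_mul; first by apply: good_exp; apply: good_opp; exact: good1.
  rewrite -exprVn; apply: good_exp; exact: good_fq_inv.
have gG : Good n (- (g1 - lam * g2) / (fa * fq ^+ n)).
  apply: good_mul; first by apply: good_opp; apply: good_sub => //; apply: good_mul.
  rewrite invfM -exprVn; apply: good_mul; first exact: good_fa_inv.
  apply: good_exp; exact: good_fq_inv.
have [c [j hc]] := gG.
exists c, (Dz n ^+ j); split; first by rewrite expf_neq0 // Dz_neq0.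
split; first exact: coprime_Dz.
have eP : tofrac ((1 - pa * pq ^+ n) * (pa - pq ^+ n)) = (1 - fa * fq ^+ n) * (fa - fq ^+ n).
  by rewrite tofracM !tofracB tofrac1 tofracM !tofracXn.
rewrite hAB eP -mulrA; congr (_ * _).
rewrite tofracXn; apply: fin_div => //.
by rewrite expf_neq0 // tofrac_eq0 Dz_neq0.
Qed.
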